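(* Let $a,d$ be positive integers with $d$ not a perfect square, $\alpha=a+\sqrt d$, $N_\alpha=a^2-d$, and suppose $-N_\alpha$ is an odd perfect square. Let $t,u$ be positive integers with $\varepsilon=(t+u\sqrt d)/2$ a unit of the ring of integers of $\mathbb{Q}(\sqrt d)$, define $x_k+y_k\sqrt d=\alpha\varepsilon^{2k}$, suppose $y_{-1}>1$, and suppose that for some $\sigma\in\{1,-1\}$, $y_\sigma$ is the square of an integer. (a) If $t^2-du^2=4$, then $t\equiv2\pmod4$ and $u\equiv0\pmod4$. (b) If $t^2-du^2=-4$, then $u\equiv2\pmod4$. *)

(* Defs.v *)
From mathcomp Require Import all_boot all_order all_algebra all_field.
Set Implicit Arguments. Unset Strict Implicit. Unset Printing Implicit Defensive.
Import Order.TTheory GRing.Theory Num.Theory.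
Local Open Scope ring_scope.

(* Q(sqrt d) is realised inside the algebraic complex numbers algC. *)
Definition sqd (d : nat) : algC := sqrtC (d%:R).

Definition alphaQ (a d : nat) : algC := a%:R + sqd d.

Definition epsQ (t u d : nat) : algC := (t%:R + u%:R * sqd d) / 2%:R.

(* epsilon is a unit of the ring of integers of Q(sqrt d): both epsilon and
   its inverse are algebraic integers (they lie in Q(sqrt d) automatically). *)
Definition unit_ring_of_integers (e : algC) : Prop :=
  e != 0 /\ e \in Aint /\ e^-1 \in Aint.

(* y is the coefficient y_k in  x_k + y_k sqrt d = alpha * epsilon^(2k)
   (x_k, y_k rational; they are unique because d is not a square). *)
Definition is_yk (a d t u : nat) (k : int) (y : rat) : Prop :=
  exists x : rat,
    alphaQ a d * epsQ t u d ^ (2%:Z * k) = ratr x + ratr y * sqd d.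

(* Main.v *)
Require Import Defs.
From mathcomp Require Import all_boot all_order all_algebra all_field.
From mathcomp Require Import ring zify.
Import Order.TTheory GRing.Theory Num.Theory.

Lemma split2 (x : nat) : exists q, x = (2*q)%N \/ x = (2*q+1)%N.
Proof. exists (x %/ 2)%N; lia. Qed.
Ltac sp x q := let E := fresh in have [q [E|E]] := split2 x; subst x.
Lemma coreA (a j t u k : nat) :
  (t^2 + (a^2 + (2*j+1)^2)*u^2 + 2*a*t*u = 4*k)%N ->
  ((t^2 = (a^2 + (2*j+1)^2)*u^2 + 4)%N -> t %% 4 = 2 /\ u %% 4 = 0).
Proof.
move=> K H.
sp u v.
-
  sp t s; last by exfalso; lia.
  have {H K} H : (s^2 = (a^2 + (2*j+1)^2)*v^2 + 1)%N by lia.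
  sp v w.
  + sp s r; first by exfalso; lia.
    lia.
  + exfalso. sp a b; sp s r; lia.
- exfalso. sp a b; sp t s; lia.
Qed.
Lemma coreB (a j t u k : nat) :
  (t^2 + (a^2 + (2*j+1)^2)*u^2 + 2*a*t*u = 4*k)%N ->
  ((t^2 + 4 = (a^2 + (2*j+1)^2)*u^2)%N -> u %% 4 = 2).
Proof.
move=> K H.
sp u v.
- sp t s; last by exfalso; lia.
  have {H K} H : (s^2 + 1 = (a^2 + (2*j+1)^2)*v^2)%N by lia.
  sp v w; last by lia.
  exfalso; sp s r; lia.
- exfalso. sp a b; sp t s; lia.
Qed.
Local Open Scope ring_scope.

Lemma irr (d : nat) (p q : algC) : ~ (exists m : nat, d = (m ^ 2)%N) ->
  p \in Crat -> q \in Crat -> p + q * sqd d = 0 -> q = 0.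
Proof.
move=> nsq Hp Hq E; apply/eqP; apply/negPn/negP => qn0; apply: nsq.
have hq : q * sqd d = - p by rewrite -(addKr p (q * sqd d)) E addr0.
have hs : sqd d = - p / q by rewrite -hq mulrC mulKf.
have sC : sqd d \in Crat by rewrite hs rpredM ?rpredN ?rpredV.
have sA : sqd d \in Aint.
  apply: (@root_monic_Aint ('X^2 - (d%:R)%:P)).
  - by rewrite /root !hornerE /sqd sqrtCK subrr.
  - by rewrite monicXnsubC.
  - by rewrite polyOverXnsubC rpred_nat.
have sI := Cint_rat_Aint sC sA.
have : sqd d \is a Num.nat by rewrite natrEint sI sqrtC_ge0 ler0n.
case/natrP => k hk; exists k; apply/eqP; rewrite -(eqr_nat algC) natrX -hk /sqd sqrtCK.
done.
Qed.

Lemma redsq [s D z w : algC] (c : algC) : s ^+ 2 = D -> z - w = c * (s ^+ 2 - D) -> z = w.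
Proof. by move=> h; rewrite h subrr mulr0 => /eqP; rewrite subr_eq0 => /eqP. Qed.

Lemma nsq (n : int) : (n%:~R ^+ 2 : algC) = ((absz n) ^ 2)%N%:R.
Proof. by case: n => p; rewrite ?NegzE ?rmorphN ?sqrrN natrX. Qed.

Lemma key (a d t u : nat) (sg : bool) (n : int) (x : rat) :
  ~ (exists m : nat, d = (m ^ 2)%N) ->
  ((t^2 = d*u^2+4)%N \/ (t^2+4 = d*u^2)%N) ->
  alphaQ a d * epsQ t u d ^ (2%:Z * (if sg then 1 else -1)) =
     ratr x + ratr (n%:~R ^+ 2) * sqd d ->
  exists k, (t^2 + d*u^2 + 2*a*t*u = 4*k)%N.
Proof.
move=> nsqd hN0 E.
set s := sqd d in E.
have hs : s ^+ 2 = d%:R by rewrite /s /sqd sqrtCK.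
set P : algC := t%:R ^+ 2 + d%:R * u%:R ^+ 2.
have hN : (t%:R ^+ 2 - d%:R * u%:R ^+ 2 : algC) ^+ 2 = 16.
  case: hN0 => /(congr1 (fun z => z%:R : algC)); rewrite ?natrD natrM !natrX.
    by move=> ->; ring.
  move=> h; have -> : (t%:R ^+ 2 : algC) = d%:R * u%:R ^+ 2 - 4 by rewrite -h addrK.
  ring.
have h1 : epsQ t u d ^+ 2 = (P + 2 * t%:R * u%:R * s) / 4.
  apply: (redsq (u%:R ^+ 2 / 4) hs); rewrite /epsQ /P -/s; by field.
have h2 : ((t%:R - u%:R * s) / 2) ^+ 2 = (P - 2 * t%:R * u%:R * s) / 4.
  apply: (redsq (u%:R ^+ 2 / 4) hs); rewrite /P; by field.
have h3 : (P + 2 * t%:R * u%:R * s) / 4 * ((P - 2 * t%:R * u%:R * s) / 4) = 1.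
  transitivity ((P ^+ 2 - 4 * t%:R ^+ 2 * u%:R ^+ 2 * d%:R) / 16).
    by apply: (redsq (- (t%:R * u%:R) ^+ 2 / 4) hs); by field.
  have -> : P ^+ 2 - 4 * t%:R ^+ 2 * u%:R ^+ 2 * d%:R = 
     (t%:R ^+ 2 - d%:R * u%:R ^+ 2 : algC) ^+ 2 by rewrite /P; ring.
  by rewrite hN; by field.
have [X XC hX] : exists2 X, X \in Crat & alphaQ a d * epsQ t u d ^ (2%:Z * (if sg then 1 else -1)) =
    X + (P + (if sg then 2 else -2) * a%:R * t%:R * u%:R) / 4 * s.
  destruct sg.
  - rewrite mulr1 -exprnP h1.
    exists ((a%:R * P + 2 * d%:R * t%:R * u%:R) / 4).
      by rewrite /P !(rpredD, rpredM, rpredV, rpredN, rpredX, rpred_nat).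
    rewrite /alphaQ -/s; apply: (redsq (2 * t%:R * u%:R / 4) hs); rewrite /P; by field.
  - rewrite mulrN1 -invr_expz -exprnP h1 (mulr1_eq h3).
    exists ((a%:R * P - 2 * d%:R * t%:R * u%:R) / 4).
      by rewrite /P !(rpredD, rpredB, rpredM, rpredV, rpredN, rpredX, rpred_nat).
    rewrite /alphaQ -/s; apply: (redsq (- 2 * t%:R * u%:R / 4) hs); rewrite /P; by field.
rewrite hX rmorphXn /= ratr_int nsq in E.
set Y := (P + _ * _ * _ * _) / 4 in E.
have hY : Y = ((absz n) ^ 2)%N%:R.
  apply/eqP; rewrite -subr_eq0; apply/eqP; apply: (@irr d (X - ratr x)) => //.
  - by rewrite rpredB ?Crat_rat.
  - by rewrite /Y /P; destruct sg; rewrite !(rpredD, rpredB, rpredM, rpredV, rpredN, rpredX, rpred_nat).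
  - by rewrite mulrBl addrACA E -opprD subrr.
exists ((absz n) ^ 2 + (if sg then 0 else a * t * u))%N.
apply/eqP; rewrite -(eqr_nat algC).
destruct sg; rewrite ?addn0 natrM ?natrD -hY /Y /P !(natrD, natrM, natrX); apply/eqP; by field.
Qed.

Theorem lemma5p4 (a d t u : nat) :
  (0 < a)%N -> (0 < d)%N ->
  ~ (exists m : nat, d = (m ^ 2)%N) ->
  (* -N_alpha = d - a^2 is an odd perfect square *)
  (exists m : nat, odd m /\ (d%:Z - (a ^ 2)%N%:Z = (m ^ 2)%N%:Z)) ->
  (0 < t)%N -> (0 < u)%N ->
  unit_ring_of_integers (epsQ t u d) ->
  (* y_{-1} > 1 *)
  (exists y : rat, is_yk a d t u (-1) y /\ 1 < y) ->
  (* y_sigma is the square of an integer for some sigma in {1,-1} *)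
  (exists (sigma : int) (n : int) ,
      (sigma = 1 \/ sigma = -1) /\ is_yk a d t u sigma (n%:~R ^+ 2)) ->
  ((t ^ 2)%N%:Z - (d * u ^ 2)%N%:Z = 4 ->
     (t %% 4 = 2)%N /\ (u %% 4 = 0)%N) /\
  ((t ^ 2)%N%:Z - (d * u ^ 2)%N%:Z = -4 ->
     (u %% 4 = 2)%N).
Proof.
move=> _ _ nsq [m [mo hm]] _ _ _ _ [sigma [n [hsg [x hx]]]].
have hd : d = (a ^ 2 + m ^ 2)%N by lia.
have [j hj] : exists j, m = (2 * j + 1)%N.
  exists m./2; rewrite -[m in LHS]odd_double_half mo; lia.
have kk : ((t^2 = d*u^2+4)%N \/ (t^2+4 = d*u^2)%N) -> exists k, (t^2 + d*u^2 + 2*a*t*u = 4*k)%N.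
  move=> hN; case: hsg hx => -> hx.
  - exact: (@key a d t u true n x nsq hN hx).
  - exact: (@key a d t u false n x nsq hN hx).
split=> H.
- have hN : (t^2 = d*u^2+4)%N by lia.
  have [k hk] := kk (or_introl hN).
  rewrite hd hj in hk hN.
  exact: (@coreA a j t u k hk hN).
- have hN : (t^2 + 4 = d*u^2)%N by lia.
  have [k hk] := kk (or_intror hN).
  rewrite hd hj in hk hN.
  exact: (@coreB a j t u k hk hN).
Qed.
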